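(* Let $\Omega=[-1,1]$, $\mathbb{X}=C([-1,1])$ with the supremum norm, $J=[t_0,t_0+T]$, and assume the standing setup below. For $n\in\mathbb{N}$ let $h_x=2/n$, $x_i=-1+ih_x$ ($i=0,\dots,n$), let $\ell_i$ be the continuous piecewise-linear ''hat'' functions with $\ell_i(x_j)=\delta_{ij}$ and breakpoints $\{x_j\}$ (supported on $[x_{i-1},x_{i+1}]\cap[-1,1]$), $\mathbb{X}_n=\mathrm{span}\{\ell_0,\dots,\ell_n\}$, and $P_nv=\sum_{j=0}^n v(x_j)\ell_j$. For $u_0\in\mathbb{X}$, let $u$ solve $u'=N(t,u)$, $u(t_0)=u_0$ and $u_n$ solve $u_n'=P_nN(t,u_n)$, $u_n(t_0)=P_nu_0$. Then $\|u-u_n\|_{C(J,\mathbb{X})}\to0$ as $n\to\infty$. If moreover $u\in C(J,C^2([-1,1]))$, there exists a constant $\kappa_u>0$, depending on $u$ but not on $n$, such that $\|u-u_n\|_{C(J,\mathbb{X})}\le\kappa_uh_x^2$, so the error is $O(n^{-2})$.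
   Context: Standing setup: the kernel $w$ on $[-1,1]^2$ satisfies $\lim_{h\to0}\sup_{|x-z|\le h}\int_{-1}^1|w(x,y)-w(z,y)|dy=0$ and $\sup_{x}\int_{-1}^1|w(x,y)|dy<\infty$; $f:\mathbb{R}\to\mathbb{R}$ is bounded, everywhere differentiable and Lipschitz with $f,f'$ bounded; $\xi\in C(J,\mathbb{X})$. $F(u)(x)=f(u(x))$, $(Wu)(x)=\int_{-1}^1w(x,y)u(y)dy$, $N(t,u)=-u+WF(u)+\xi(t)$. Solutions are $C^1(J,\mathbb{X})$ functions satisfying the equation on $J$. $\|v\|_{C(J,\mathbb{X})}=\max_{t\in J}\|v(t)\|_\infty$. *)

(* Defs.v *)
From HB Require Import structures.
From mathcomp Require Import all_boot all_order all_algebra.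
From mathcomp Require Import all_classical all_reals all_analysis.
Set Implicit Arguments. Unset Strict Implicit. Unset Printing Implicit Defensive.
Import Order.TTheory GRing.Theory Num.Theory.
Import numFieldNormedType.Exports.
Local Open Scope classical_set_scope.
Local Open Scope ring_scope.

Section Defs.
Variable R : realType.

Definition Omega : set R := `[(-1)%R, 1%R]%classic.

Definition Wop (w : R -> R -> R) (v : R -> R) : R -> R :=
  fun x => (\int[lebesgue_measure]_(y in Omega) (w x y * v y))%R.

Definition Nop (w : R -> R -> R) (f : R -> R) (xi : R -> R -> R)
  (t : R) (v : R -> R) : R -> R :=
  fun x => - v x + Wop w (fun y => f (v y)) x + xi t x.

Definition hx (n : nat) : R := 2 / n%:R.
Definition node (n i : nat) : R := -1 + i%:R * hx n.

(* continuous piecewise-linear hat function l_i with l_i(x_j) = delta_ij,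
   breakpoints {x_j}, support [x_{i-1}, x_{i+1}] *)
Definition hat (n i : nat) (x : R) : R :=
  Num.max 0 (1 - `|x - node n i| / hx n).

Definition Pn (n : nat) (v : R -> R) : R -> R :=
  fun x => \sum_(j < n.+1) v (node n j) * hat n j x.

Definition inX (v : R -> R) : Prop := {within `[(-1)%R, 1%R], continuous v}.

(* v : J -> X belongs to C(J, X), J = [t0, t0+T], X with sup norm *)
Definition inCJX (t0 T : R) (v : R -> R -> R) : Prop :=
  (forall t, t \in `[t0, t0 + T] -> inX (v t)) /\
  (forall t, t \in `[t0, t0 + T] -> forall eps, 0 < eps ->
     exists2 delta, 0 < delta & forall s, s \in `[t0, t0 + T] ->
       `|s - t| < delta -> forall x, x \in `[(-1)%R, 1%R] ->
         `|v s x - v t x| <= eps).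

Definition hasDerivCJX (t0 T : R) (v v' : R -> R -> R) : Prop :=
  forall t, t \in `[t0, t0 + T] -> forall eps, 0 < eps ->
    exists2 delta, 0 < delta & forall s, s \in `[t0, t0 + T] ->
      0 < `|s - t| < delta -> forall x, x \in `[(-1)%R, 1%R] ->
        `|(v s x - v t x) / (s - t) - v' t x| <= eps.

Definition isSolution (t0 T : R) (G : R -> (R -> R) -> (R -> R))
  (v0 : R -> R) (v : R -> R -> R) : Prop :=
  exists v' : R -> R -> R,
    [/\ inCJX t0 T v, inCJX t0 T v', hasDerivCJX t0 T v v',
        (forall t, t \in `[t0, t0 + T] -> forall x, x \in `[(-1)%R, 1%R] ->
           v' t x = G t (v t) x) &
        (forall x, x \in `[(-1)%R, 1%R] -> v t0 x = v0 x)].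

Definition hasDerivOmega (g g' : R -> R) : Prop :=
  forall x, x \in `[(-1)%R, 1%R] -> forall eps, 0 < eps ->
    exists2 delta, 0 < delta & forall y, y \in `[(-1)%R, 1%R] ->
      0 < `|y - x| < delta -> `|(g y - g x) / (y - x) - g' x| <= eps.

(* v in C(J, C^2([-1,1])) (C^2 with norm sum_{k<=2} sup |v^(k)|) *)
Definition inCJC2 (t0 T : R) (v : R -> R -> R) : Prop :=
  exists v1 v2 : R -> R -> R,
    [/\ inCJX t0 T v, inCJX t0 T v1, inCJX t0 T v2,
        (forall t, t \in `[t0, t0 + T] -> hasDerivOmega (v t) (v1 t)) &
        (forall t, t \in `[t0, t0 + T] -> hasDerivOmega (v1 t) (v2 t))].

End Defs.

(* Main.v *)
Require Import Defs.
From HB Require Import structures.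
From mathcomp Require Import all_boot all_order all_algebra.
From mathcomp Require Import all_classical all_reals all_analysis.
From mathcomp Require Import ring lra.
Import Order.TTheory GRing.Theory Num.Theory.
Import numFieldNormedType.Exports.
Local Open Scope classical_set_scope.
Local Open Scope ring_scope.

Section RealInd.
Variable R : realType.

Lemma real_ind (a b : R) (P : R -> Prop) :
  a <= b -> P a ->
  (forall t, a < t -> t <= b -> (forall s, a <= s -> s < t -> P s) -> P t) ->
  (forall t, a <= t -> t < b -> P t ->
     exists2 d, 0 < d & forall s, t < s -> s < t + d -> s <= b -> P s) ->
  forall t, a <= t -> t <= b -> P t.
Proof.
move=> ab Pa lc st.
pose S := [set t | a <= t <= b /\ forall s, a <= s -> s <= t -> P s].
have Sa : S a.
  split; first by rewrite lexx ab.
  by move=> s aS sa; have -> : s = a by apply/eqP; rewrite eq_le sa aS.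
have hs : has_sup S.
  split; first by exists a.
  by exists b => y [/andP[_ ?] _].
pose c := sup S.
have ac : a <= c by apply: (ub_le_sup hs.2).
have cb : c <= b by apply: ge_sup; [exact: hs.1 | move=> y [/andP[_ ?] _]].
have below : forall s, a <= s -> s < c -> P s.
  move=> s aS sc.
  have [e [_ He] ce] := @sup_adherent _ S (c - s) (ltac:(by rewrite subr_gt0)) hs.
  apply: He => //; rewrite -/c in ce; lra.
have Pc : P c.
  have [ac'|ac'] := eqVneq a c; first by rewrite -ac'.
  by apply: lc => //; rewrite lt_neqAle ac' ac.
have cbe : c = b.
  apply/eqP; rewrite eq_le cb /=; rewrite leNgt; apply/negP => cb'.
  have [d d0 Hd] := st c ac cb' Pc.
  pose s := Num.min (c + d / 2) b.
  have Ss : S s.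
    split.
      apply/andP; split; last by rewrite /s ge_min lexx orbT.
      by rewrite /s le_min; apply/andP; split; [lra|].
    move=> s' aS' ss'.
    have [s'c|] := ltP s' c; first exact: below.
    rewrite le_eqVlt => /orP[/eqP <-//|cs'].
    apply: Hd => //.
      move: ss'; rewrite /s le_min => /andP[? ?]; lra.
    by move: ss'; rewrite /s le_min => /andP[? ?].
  have : s <= c by apply: (ub_le_sup hs.2).
  rewrite /s ge_min => /orP[|]; lra.
move=> t aT tb.
have [tc|] := ltP t c; first exact: below.
move=> ct; have -> : t = c by apply/eqP; rewrite eq_le ct cbe tb.
exact: Pc.
Qed.

End RealInd.

Section LB.
Variable R : realType.

Lemma local_bound (a b : R) (Q : R -> R -> Prop) :
  a <= b ->
  (forall s B B', B <= B' -> Q s B -> Q s B') ->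
  (forall t, a <= t -> t <= b -> exists2 d, 0 < d &
      exists B, forall s, a <= s -> s <= b -> `|s - t| < d -> Q s B) ->
  exists B, forall s, a <= s -> s <= b -> Q s B.
Proof.
move=> ab mono loc.
pose P t := exists B, forall s, a <= s -> s <= t -> Q s B.
have : P b; last by move=> [B HB]; exists B.
apply: (@real_ind R a b P ab) => //; rewrite /P.
- have [d d0 [B HB]] := loc a (lexx a) ab.
  exists B => s aS sa; have e : s = a by apply/eqP; rewrite eq_le sa aS.
  by apply: HB => //; rewrite ?e ?subrr ?normr0 // -e.
- move=> t at0 tb IH.
  have [d d0 [B1 HB1]] := loc t (ltW at0) tb.
  pose s0 := Num.max a (t - d / 2).
  have [B2 HB2] : P s0.
    apply: IH; first by rewrite le_max lexx.
    by rewrite /s0 gt_max at0 /=; lra.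
  exists (Num.max B1 B2) => s aS st.
  have [ss0|s0s] := leP s s0.
    by apply: (mono _ B2); [rewrite le_max lexx orbT|exact: HB2].
  apply: (mono _ B1); first by rewrite le_max lexx.
  apply: HB1 => //; first exact: le_trans tb.
  move: s0s; rewrite /s0 gt_max => /andP[_ h].
  rewrite ler0_norm; lra.
- move=> t at0 tb [B2 HB2].
  have [d d0 [B1 HB1]] := loc t at0 (ltW tb).
  exists d => // s ts std sb.
  exists (Num.max B1 B2) => s' aS' s's.
  have [s't|ts'] := leP s' t.
    by apply: (mono _ B2); [rewrite le_max lexx orbT|exact: HB2].
  apply: (mono _ B1); first by rewrite le_max lexx.
  apply: HB1 => //; first exact: le_trans sb.
  rewrite gtr0_norm; lra.
Qed.

End LB.

Section C.
Context {R : realType}.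
Notation I := (`[(-1:R), 1]).

Lemma inX_ed {v : R -> R} : inX v -> forall x, x \in I -> forall e, 0 < e ->
  exists2 d, 0 < d & forall y, y \in I -> `|y - x| < d -> `|v y - v x| <= e.
Proof.
move=> cv x xI e e0.
have := (@subspace_continuousP _ [set x | x \in I] _ v).1 cv x xI.
move/cvgrPdist_le/(_ e e0); rewrite near_withinE.
case/nbhs_ballP => d d0 Hd; exists d => // y yI yx.
rewrite distrC; apply: Hd => //.
by rewrite /ball /= distrC.
Qed.

End C.

Section C.
Context {R : realType}.
Notation I := (`[(-1:R), 1]).

Lemma inI (x : R) : (x \in I) = (-1 <= x <= 1).
Proof. by rewrite in_itv. Qed.

Lemma unifcont_I {g : R -> R} : inX g -> forall e, 0 < e ->
  exists2 d, 0 < d & forall x y, x \in I -> y \in I -> `|x - y| < d -> `|g x - g y| <= e.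
Proof.
move=> cg e e0.
pose Q (s B : R) := 0 < B /\ forall y, y \in I -> `|y - s| < B^-1 -> `|g y - g s| <= e / 2.
have [] : exists B, forall s, -1 <= s -> s <= 1 -> Q s B.
  apply: local_bound; first lra.
    move=> s B B' BB' [B0 HB]; split; first exact: lt_le_trans BB'.
    move=> y yI ys; apply: HB => //; apply: lt_le_trans ys _.
    by rewrite lef_pV2 ?posrE //; exact: lt_le_trans BB'.
  move=> t t1 t2.
  have tI : t \in I by rewrite inI t1 t2.
  have [d d0 Hd] := inX_ed cg t tI (e / 4) ltac:(lra).
  exists (d / 2); first lra.
  exists (2 / d) => s s1 s2 st; split; first by rewrite divr_gt0.
  have sI : s \in I by rewrite inI s1 s2.
  move=> y yI ys; rewrite invf_div in ys.
  have yt : `|y - t| < d.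
    have := ler_normD (y - s) (s - t).
    have -> : y - s + (s - t) = y - t by ring.
    lra.
  have h1 := Hd y yI yt.
  have h2 := Hd s sI ltac:(lra).
  have := ler_normD (g y - g t) (g t - g s).
  rewrite addrA subrK distrC in h2 *; lra.
move=> B HB.
have B0 : 0 < B by have [] := HB 0 ltac:(lra) ltac:(lra).
exists B^-1; first by rewrite invr_gt0.
move=> x y xI yI xy.
have := (HB y ltac:(by move: yI; rewrite inI => /andP[])
               ltac:(by move: yI; rewrite inI => /andP[])).2 x xI xy.
lra.
Qed.

Lemma bound_I {g : R -> R} : inX g -> exists B, forall x, x \in I -> `|g x| <= B.
Proof.
move=> cg.
have [B HB] : exists B, forall s, -1 <= s -> s <= 1 -> `|g s| <= B.
  apply: (@local_bound _ (-1) 1 (fun s B => `|g s| <= B)); first lra.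
    by move=> s B B' BB' h; exact: le_trans BB'.
  move=> t t1 t2.
  have tI : t \in I by rewrite inI t1 t2.
  have [d d0 Hd] := inX_ed cg t tI 1 ltac:(lra).
  exists d => //; exists (`|g t| + 1) => s s1 s2 st.
  have sI : s \in I by rewrite inI s1 s2.
  have := Hd s sI st.
  have := ler_normD (g s - g t) (g t); rewrite subrK; lra.
exists B => x; rewrite inI => /andP[? ?]; exact: HB.
Qed.

Section J.
Variables (t0 T : R).
Hypothesis T0 : 0 < T.
Notation J := (`[t0, t0 + T]).

Lemma inJ (x : R) : (x \in J) = (t0 <= x <= t0 + T).
Proof. by rewrite in_itv. Qed.

Lemma unifcont_JI (v : R -> R -> R) : inCJX t0 T v -> forall e, 0 < e ->
  exists2 d, 0 < d & forall t x y, t \in J -> x \in I -> y \in I ->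
    `|x - y| < d -> `|v t x - v t y| <= e.
Proof.
move=> [cx ct] e e0.
pose Q (s B : R) := 0 < B /\ forall x y, x \in I -> y \in I ->
   `|x - y| < B^-1 -> `|v s x - v s y| <= e.
have [] : exists B, forall s, t0 <= s -> s <= t0 + T -> Q s B.
  apply: local_bound; first by have := T0; lra.
    move=> s B B' BB' [B0 HB]; split; first exact: lt_le_trans BB'.
    move=> x y xI yI ys; apply: HB => //; apply: lt_le_trans ys _.
    by rewrite lef_pV2 ?posrE //; exact: lt_le_trans BB'.
  move=> t t1 t2.
  have tJ : t \in J by rewrite inJ t1 t2.
  have [d1 d10 Hd1] := unifcont_I (cx t tJ) (e / 3) ltac:(lra).
  have [d2 d20 Hd2] := ct t tJ (e / 3) ltac:(lra).
  exists d2 => //; exists d1^-1 => s s1 s2 st; split; first by rewrite invr_gt0.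
  have sJ : s \in J by rewrite inJ s1 s2.
  move=> x y xI yI; rewrite invrK => xy.
  have h1 := Hd2 s sJ st x xI.
  have h2 := Hd2 s sJ st y yI.
  have h3 := Hd1 x y xI yI xy.
  have := ler_normD (v s x - v t x) (v t x - v t y).
  have := ler_normD (v s x - v t x + (v t x - v t y)) (v t y - v s y).
  rewrite distrC in h2.
  have -> : v s x - v t x + (v t x - v t y) + (v t y - v s y) = v s x - v s y by ring.
  lra.
move=> B HB.
have tT : t0 <= t0 + T by have := T0; lra.
have B0 : 0 < B by have [] := HB t0 (lexx _) tT.
exists B^-1; first by rewrite invr_gt0.
move=> t x y tJ xI yI xy.
move: tJ; rewrite inJ => /andP[? ?].
exact: (HB t _ _).2.
Qed.

Lemma bound_JI (v : R -> R -> R) : inCJX t0 T v ->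
  exists B, forall t x, t \in J -> x \in I -> `|v t x| <= B.
Proof.
move=> [cx ct].
have [B HB] : exists B, forall s, t0 <= s -> s <= t0 + T ->
    forall x, x \in I -> `|v s x| <= B.
  apply: (@local_bound _ t0 (t0 + T) (fun s B => forall x, x \in I -> `|v s x| <= B)); first by have := T0; lra.
    by move=> s B B' BB' h x xI; apply: le_trans BB'; exact: h.
  move=> t t1 t2.
  have tJ : t \in J by rewrite inJ t1 t2.
  have [B0 HB0] := bound_I (cx t tJ).
  have [d d0 Hd] := ct t tJ 1 ltac:(lra).
  exists d => //; exists (B0 + 1) => s s1 s2 st x xI.
  have sJ : s \in J by rewrite inJ s1 s2.
  have := Hd s sJ st x xI; have := HB0 x xI.
  have := ler_normD (v s x - v t x) (v t x); rewrite subrK; lra.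
exists B => t x; rewrite inJ => /andP[? ?]; exact: HB.
Qed.

End J.
End C.

Section M.
Context {R : realType}.

Lemma quot_bound {x y gx gy c e : R} : x != y ->
  `|(gy - gx) / (y - x) - c| <= e -> `|gy - gx| <= (`|c| + e) * `|y - x|.
Proof.
move=> xy h.
have yx0 : y - x != 0 by rewrite subr_eq0 eq_sym.
have -> : gy - gx = (gy - gx) / (y - x) * (y - x) by rewrite divfK.
rewrite normrM ler_wpM2r //.
have := ler_normD ((gy - gx) / (y - x) - c) c; rewrite subrK.
have := normr_ge0 c; lra.
Qed.

Lemma left_close (a t : R) (F Pb : R -> R) : a < t ->
  (forall e, 0 < e -> exists2 d, 0 < d & forall s, a <= s -> s < t -> t - s < d ->
       `|F t - F s| <= e) ->
  (forall s, a <= s -> s < t -> `|F s| <= Pb s) ->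
  (forall s, s <= t -> Pb s <= Pb t) -> `|F t| <= Pb t.
Proof.
move=> at0 cont below mono.
apply/ler_addgt0Pr => e e0.
have [d d0 Hd] := cont e e0.
pose s := Num.max a (t - d / 2).
have s1 : a <= s by rewrite le_max lexx.
have s2 : s < t by rewrite gt_max at0 /=; lra.
have s4 : t - d / 2 <= s by rewrite /s le_max lexx orbT.
have s3 : t - s < d by lra.
have := Hd s s1 s2 s3; have := below s s1 s2; have := mono s (ltW s2).
have := ler_normD (F t - F s) (F s); rewrite subrK; lra.
Qed.

Lemma deriv_cont {a b : R} {g : R -> R} {z g'z : R} :
  (forall e, 0 < e -> exists2 d, 0 < d & forall y, a <= y -> y <= b -> 0 < `|y - z| < d ->
      `|(g y - g z) / (y - z) - g'z| <= e) ->
  forall e, 0 < e -> exists2 d, 0 < d & forall y, a <= y -> y <= b -> `|y - z| < d ->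
      `|g y - g z| <= e.
Proof.
move=> hd e e0.
have [d d0 Hd] := hd 1 ltr01.
have C0 : 0 < `|g'z| + 1 by have := normr_ge0 g'z; lra.
exists (Num.min d (e / (`|g'z| + 1))).
  by rewrite lt_min d0 divr_gt0.
move=> y ay yb; rewrite lt_min => /andP[yd ye].
have [->|yz] := eqVneq y z; first by rewrite subrr normr0 ltW.
have zy : z != y by rewrite eq_sym.
have h := quot_bound zy (Hd y ay yb ltac:(by rewrite normr_gt0 subr_eq0 yz yd)).
apply: le_trans h _.
by rewrite mulrC -ler_pdivlMr // ltW.
Qed.

Lemma mvt_ineq (g g' : R -> R) (a b B : R) : a <= b ->
  (forall z, a <= z -> z <= b -> forall e, 0 < e -> exists2 d, 0 < d &
     forall y, a <= y -> y <= b -> 0 < `|y - z| < d ->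
       `|(g y - g z) / (y - z) - g' z| <= e) ->
  (forall z, a <= z -> z <= b -> `|g' z| <= B) ->
  `|g b - g a| <= B * (b - a).
Proof.
move=> ab hd hB.
have B0 : 0 <= B by apply: le_trans (hB a (lexx a) ab).
apply/ler_addgt0Pr => e e0.
pose eps := e / (b - a + 1).
have eps0 : 0 < eps by rewrite divr_gt0 //; lra.
have epsb : eps * (b - a) <= e.
  rewrite /eps mulrAC ler_pdivrMr; last lra.
  rewrite ler_wpM2l //; [exact: ltW|lra].
suff : `|g b - g a| <= (B + eps) * (b - a) by rewrite mulrDl; lra.
apply: (@real_ind R a b (fun t => `|g t - g a| <= (B + eps) * (t - a))) => //.
- by rewrite subrr normr0 subrr mulr0.
- move=> t at0 tb IH.
  apply: (@left_close a t (fun s => g s - g a) (fun s => (B + eps) * (s - a))) => //.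
  + move=> e' e0'.
    have [d d0 Hd] := deriv_cont (hd t (ltW at0) tb) e' e0'.
    exists d => // s aS st ts.
    have : `|g s - g t| <= e' by apply: Hd => //;
      [exact: le_trans (ltW st) tb | rewrite ltr0_norm ?subr_lt0 //; lra].
    by rewrite distrC; have -> : g t - g a - (g s - g a) = g t - g s by ring.
  + move=> s st; rewrite ler_wpM2l //; [lra|lra].
- move=> t at0 tb IH.
  have [d d0 Hd] := hd t at0 (ltW tb) eps eps0.
  exists d => // s ts std sb.
  have sz : t != s by rewrite lt_eqF.
  have := quot_bound sz (Hd s ltac:(lra) sb ltac:(rewrite gtr0_norm; lra)).
  rewrite [`|s - t|]gtr0_norm; last lra.
  have := hB t at0 (ltW tb) => hBt h.
  have h2 : (`|g' t| + eps) * (s - t) <= (B + eps) * (s - t) by rewrite ler_wpM2r; lra.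
  have := ler_normD (g s - g t) (g t - g a).
  have -> : g s - g t + (g t - g a) = g s - g a by ring.
  have -> : (B + eps) * (s - a) = (B + eps) * (t - a) + (B + eps) * (s - t) by ring.
  lra.
Qed.

End M.

Section Tay.
Context {R : realType}.
Notation I := (`[(-1:R), 1]).

Lemma hd_restrict {g g' : R -> R} {a b : R} : hasDerivOmega g g' -> -1 <= a -> b <= 1 ->
  forall z, a <= z -> z <= b -> forall e, 0 < e -> exists2 d, 0 < d &
     forall y, a <= y -> y <= b -> 0 < `|y - z| < d ->
       `|(g y - g z) / (y - z) - g' z| <= e.
Proof.
move=> hg a1 b1 z az zb e e0.
have zI : z \in I by rewrite inI; apply/andP; split; lra.
have [d d0 Hd] := hg z zI e e0.
exists d => // y ay yb yz; apply: Hd => //.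
by rewrite inI; apply/andP; split; lra.
Qed.

Lemma hd_shift {v v1 : R -> R} (x c : R) : hasDerivOmega v v1 ->
  hasDerivOmega (fun z => v z - v x - c * (z - x)) (fun z => v1 z - c).
Proof.
move=> hv z zI e e0.
have [d d0 Hd] := hv z zI e e0.
exists d => // y yI yz.
have yz0 : y - z != 0 by rewrite -normr_gt0; case/andP: yz.
have -> : (v y - v x - c * (y - x) - (v z - v x - c * (z - x))) / (y - z) - (v1 z - c)
   = (v y - v z) / (y - z) - v1 z.
  have -> : v y - v x - c * (y - x) - (v z - v x - c * (z - x)) = (v y - v z) - c * (y - z)
    by ring.
  by rewrite mulrBl -mulrA divff // mulr1; ring.
exact: Hd.
Qed.

Lemma taylor (v v1 v2 : R -> R) (B : R) :
  hasDerivOmega v v1 -> hasDerivOmega v1 v2 -> (forall x, x \in I -> `|v2 x| <= B) ->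
  forall x y, x \in I -> y \in I ->
    `|v y - v x - v1 x * (y - x)| <= B * (y - x) ^+ 2.
Proof.
move=> h1 h2 hB x y; rewrite !inI => /andP[x1 x2] /andP[y1 y2].
have B0 : 0 <= B by apply: le_trans (hB x _); rewrite ?inI ?x1 ?x2.
have hB' : forall z, -1 <= z -> z <= 1 -> `|v2 z| <= B.
  by move=> z z1 z2; apply: hB; rewrite inI z1 z2.
have hs := hd_shift x (v1 x) h1.
have [xy|yx] := leP x y.
- have := @mvt_ineq R _ _ x y (B * (y - x)) xy
    (hd_restrict hs x1 y2) _.
  have -> : v x - v x - v1 x * (x - x) = 0 by ring.
  rewrite subr0 -mulrA -expr2; apply.
  move=> z xz zy.
  have z1 : z <= 1 by lra.
  have hb : forall z', x <= z' -> z' <= z -> `|v2 z'| <= B.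
    by move=> z' ? ?; apply: hB'; lra.
  have h := @mvt_ineq R v1 v2 x z B xz (@hd_restrict v1 v2 x z h2 x1 z1) hb.
  apply: le_trans h _; rewrite ler_wpM2l //; lra.
- have := @mvt_ineq R _ _ y x (B * (x - y)) (ltW yx)
    (hd_restrict hs y1 x2) _.
  have -> : v x - v x - v1 x * (x - x) = 0 by ring.
  rewrite sub0r normrN.
  have -> : (y - x) ^+ 2 = (x - y) * (x - y) by ring.
  rewrite mulrA; apply.
  move=> z yz zx.
  have z1 : -1 <= z by lra.
  have hb : forall z', z <= z' -> z' <= x -> `|v2 z'| <= B.
    by move=> z' ? ?; apply: hB'; lra.
  have h := @mvt_ineq R v1 v2 z x B zx (@hd_restrict v1 v2 z x h2 z1 x2) hb.
  rewrite distrC in h; apply: le_trans h _; rewrite ler_wpM2l //; lra.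
Qed.

End Tay.

Section Hat.
Context {R : realType}.
Notation I := (`[(-1:R), 1]).
Variable n : nat.
Hypothesis n0 : (0 < n)%N.

Lemma n_gt0 : 0 < n%:R :> R.
Proof. by rewrite ltr0n. Qed.

Lemma hx_gt0 : 0 < hx R n :> R.
Proof. by rewrite /hx divr_gt0 // n_gt0. Qed.

Lemma node_succ (j : nat) : node R n j.+1 = node R n j + hx R n :> R.
Proof. rewrite /node -addn1 natrD; ring. Qed.

Lemma node0 : node R n 0 = -1 :> R.
Proof. by rewrite /node mul0r addr0. Qed.

Lemma noden : node R n n = 1 :> R.
Proof.
rewrite /node /hx mulrC divfK; first lra.
by rewrite gt_eqF // n_gt0.
Qed.

Lemma node_le (i j : nat) : (i <= j)%N -> node R n i <= node R n j :> R.
Proof.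
move=> ij; rewrite /node lerD2l ler_wpM2r //; first exact: ltW hx_gt0.
by rewrite ler_nat.
Qed.

Lemma node_diff (i j : nat) : node R n j - node R n i = (j%:R - i%:R) * hx R n :> R.
Proof. rewrite /node; ring. Qed.

Lemma node_I (j : nat) : (j <= n)%N -> node R n j \in I.
Proof.
move=> jn; rewrite inI; apply/andP; split.
  by rewrite -node0; apply: node_le.
by rewrite -noden; apply: node_le.
Qed.

Lemma hat_ge0 (j : nat) (x : R) : 0 <= hat n j x.
Proof. by rewrite /hat le_max lexx. Qed.

Lemma hat_zero (j : nat) (x : R) : hx R n <= `|x - node R n j| -> hat n j x = 0.
Proof.
move=> h; rewrite /hat; apply/max_idPl.
rewrite subr_le0 ler_pdivlMr ?mul1r //; exact: hx_gt0.
Qed.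

Lemma hat_in (j : nat) (x : R) : `|x - node R n j| <= hx R n ->
  hat n j x = 1 - `|x - node R n j| / hx R n.
Proof.
move=> h; rewrite /hat; apply/max_idPr.
rewrite subr_ge0 ler_pdivrMr ?mul1r //; exact: hx_gt0.
Qed.

Lemma bracket (x : R) : x \in I ->
  exists k, (k < n)%N /\ node R n k <= x <= node R n k.+1.
Proof.
rewrite inI => /andP[x1 x2].
suff H : forall m, (0 < m)%N -> x <= node R n m ->
    exists k, (k < m)%N /\ node R n k <= x <= node R n k.+1.
  by apply: H => //; rewrite noden.
elim=> [//|m IH] _ xm.
case: m IH xm => [|m] IH xm.
  by exists 0%N; split => //; rewrite node0 x1 xm.
have [xm'|mx] := leP x (node R n m.+1).
  have [k [km kx]] := IH isT xm'.
  by exists k; split => //; apply: ltn_trans km _.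
by exists m.+1; split => //; rewrite (ltW mx) xm.
Qed.

Lemma sum_two (F : nat -> R) (k : nat) : (k < n)%N ->
  (forall j, (j <= n)%N -> j != k -> j != k.+1 -> F j = 0) ->
  \sum_(j < n.+1) F j = F k + F k.+1.
Proof.
move=> kn HF.
have k1 : (k < n.+1)%N by apply: ltn_trans kn _.
have k2 : (k.+1 < n.+1)%N by [].
rewrite (bigD1 (inord k)) //= (bigD1 (inord k.+1)) //=; last first.
  by rewrite -val_eqE /= !inordK // gtn_eqF.
rewrite big1 ?addr0 ?inordK //.
move=> i /andP[h1 h2]; apply: HF.
- by rewrite -ltnS ltn_ord.
- by move: h1; rewrite -val_eqE /= inordK.
- by move: h2; rewrite -val_eqE /= inordK.
Qed.

Lemma hat_two (x : R) (k : nat) : (k < n)%N -> node R n k <= x <= node R n k.+1 ->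
  forall j, (j <= n)%N -> j != k -> j != k.+1 -> hat n j x = 0.
Proof.
move=> kn /andP[xk1 xk2] j jn jk jk1; apply: hat_zero.
have hp := hx_gt0.
have [jlt|kltj] := ltnP j k.
  have : node R n j.+1 <= node R n k by apply: node_le.
  rewrite node_succ => h; rewrite ger0_norm; lra.
have k1j : (k.+2 <= j)%N.
  by rewrite ltn_neqAle eq_sym jk1 /= ltn_neqAle eq_sym jk kltj.
have : node R n k.+2 <= node R n j by apply: node_le.
rewrite node_succ => h; rewrite ler0_norm; lra.
Qed.

Lemma hat_sums (x : R) : x \in I ->
  \sum_(j < n.+1) hat n j x = 1 /\ \sum_(j < n.+1) node R n j * hat n j x = x.
Proof.
move=> xI; have [k [kn /andP[xk1 xk2]]] := bracket x xI.
have hp := hx_gt0.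
have hz := hat_two x k kn (ltac:(by rewrite xk1 xk2)).
have d0 : 0 <= x - node R n k by lra.
have d1 : x - node R n k <= hx R n by move: xk2; rewrite node_succ; lra.
have d2 : x - node R n k.+1 <= 0 by lra.
have d3 : node R n k.+1 - x <= hx R n by rewrite node_succ; lra.
have e1 : hat n k x = 1 - (x - node R n k) / hx R n.
  by rewrite hat_in ger0_norm.
have e2 : hat n k.+1 x = (x - node R n k) / hx R n.
  rewrite hat_in ler0_norm ?opprB //.
  rewrite node_succ; field; exact: lt0r_neq0.
have hn : hx R n != 0 :> R by exact: lt0r_neq0.
split.
  rewrite (@sum_two (fun j => hat n j x) k kn) //.
  rewrite e1 e2; ring.
rewrite (@sum_two (fun j => node R n j * hat n j x) k kn) //; last first.
  by move=> j jn jk jk1; rewrite hz // mulr0.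
by rewrite e1 e2 node_succ; field.
Qed.

Lemma Pn_bound (x : R) (c : nat -> R) (eta : R) : x \in I ->
  (forall j, (j <= n)%N -> `|x - node R n j| < hx R n -> `|c j| <= eta) ->
  `|\sum_(j < n.+1) c j * hat n j x| <= eta.
Proof.
move=> xI hc.
apply: le_trans (ler_norm_sum _ _ _) _.
have [h1 _] := hat_sums x xI.
apply: (@le_trans _ _ (\sum_(j < n.+1) eta * hat n j x)).
  apply: ler_sum => j _; rewrite normrM (ger0_norm (hat_ge0 _ _)).
  have [hj|hj] := ltP `|x - node R n j| (hx R n).
    rewrite ler_wpM2r ?hat_ge0 //; apply: hc => //; by rewrite -ltnS ltn_ord.
  by rewrite hat_zero // !mulr0.
by rewrite -mulr_sumr h1 mulr1.
Qed.

End Hat.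

Section W.
Context {R : realType}.
Notation I := (`[(-1:R), 1]).
Notation mu := (@lebesgue_measure R).

Lemma mOmega : measurable (@Omega R : set (measurableTypeR R)).
Proof. exact: measurable_itv. Qed.

Lemma lip_cont {f : R -> R} {Lf : R} : (forall s r, `|f s - f r| <= Lf * `|s - r|) ->
  continuous f.
Proof.
move=> hf s; apply/cvgrPdist_le => e e0.
have L0 : 0 < `|Lf| + 1 by have := normr_ge0 Lf; lra.
apply/nbhs_ballP; exists (e / (`|Lf| + 1)); first by rewrite /= divr_gt0.
move=> z; rewrite /ball_ /= => hz.
apply: le_trans (hf _ _) _.
apply: (@le_trans _ _ ((`|Lf| + 1) * `|s - z|)).
  by rewrite ler_wpM2r // (le_trans (ler_norm _)) // lerDl.
by rewrite mulrC -ler_pdivlMr // ltW.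
Qed.

Lemma meas_comp {f v : R -> R} : continuous f -> inX v ->
  measurable_fun (@Omega R) (fun y => f (v y)).
Proof.
move=> cf cv.
apply: (@measurable_realfun.subspace_continuous_measurable_fun R (@Omega R) (fun y => f (v y)) mOmega).
apply/subspace_continuousP => y Oy.
apply: (@cvg_comp _ _ _ v f _ (nbhs (v y))); last exact: cf.
exact: ((@subspace_continuousP _ [set x | x \in I] _ v).1 cv y Oy).
Qed.

Lemma bnd_comp {g : R -> R} {Mf : R} : (forall y, `|g y| <= Mf) ->
  [bounded g y | y in @Omega R].
Proof.
move=> hg; rewrite /bounded_near; near=> M => t Ot /=.
apply: le_trans (hg t) _.
by near: M; apply: nbhs_pinfty_ge; exact: num_real.
Unshelve. all: end_near. Qed.

Lemma int_w {wx : R -> R} {Mw : R} : measurable_fun (@Omega R) wx ->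
  (\int[mu]_(y in @Omega R) (`|wx y|)%:E <= Mw%:E)%E ->
  mu.-integrable (@Omega R) (EFin \o wx).
Proof.
move=> mw hM; apply/integrableP; split; first exact/measurable_realfun.measurable_EFinP.
rewrite /comp; under eq_integral => y _ do rewrite abse_EFin.
by apply: le_lt_trans hM _; exact: ltry.
Qed.

Lemma int_wg {wx g : R -> R} {Mw Mf : R} : measurable_fun (@Omega R) wx ->
  (\int[mu]_(y in @Omega R) (`|wx y|)%:E <= Mw%:E)%E ->
  measurable_fun (@Omega R) g -> (forall y, `|g y| <= Mf) ->
  mu.-integrable (@Omega R) (EFin \o (fun y => wx y * g y)).
Proof.
move=> mw hM mg hg.
have h := integrableMl mOmega (int_w mw hM) mg (bnd_comp hg).
by apply: (eq_integrable mOmega _ _ _ h) => y _ /=.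
Qed.


Lemma W_lip (w : R -> R -> R) (f v1 v2 : R -> R) (x Mw Lf Mf D : R) :
  measurable_fun (@Omega R) (w x) ->
  (\int[mu]_(y in @Omega R) (`|w x y|)%:E <= Mw%:E)%E ->
  (forall s, `|f s| <= Mf) -> (forall s r, `|f s - f r| <= Lf * `|s - r|) -> 0 <= Lf ->
  inX v1 -> inX v2 -> 0 <= D -> (forall y, y \in I -> `|v1 y - v2 y| <= D) ->
  `|Wop w (fun y => f (v1 y)) x - Wop w (fun y => f (v2 y)) x| <= Lf * D * Mw.
Proof.
move=> mw hM hf hL L0 c1 c2 D0 hD.
have cf := lip_cont hL.
have m1 := meas_comp cf c1; have m2 := meas_comp cf c2.
have i1 := int_wg mw hM m1 (fun y => hf (v1 y)).
have i2 := int_wg mw hM m2 (fun y => hf (v2 y)).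
have iw := int_w mw hM.
rewrite /Wop -(RintegralB mOmega i1 i2).
have i12 : mu.-integrable (@Omega R)
    (EFin \o (fun y => w x y * f (v1 y) - w x y * f (v2 y))).
  by apply: (eq_integrable mOmega _ _ _ (integrableB mOmega i1 i2)) => y _.
apply: le_trans (le_normr_Rintegral mOmega i12) _.
have ia := integrable_norm i12.
have iw2 : mu.-integrable (@Omega R) (EFin \o (fun y => Lf * D * `|w x y|)).
  have := integrableZl mOmega (Lf * D) (integrable_norm iw).
  by apply: (eq_integrable mOmega) => y _.
apply: le_trans (le_Rintegral mOmega ia iw2 _) _.
  move=> y Oy /=.
  rewrite -mulrBr normrM mulrC ler_wpM2r //.
  apply: le_trans (hL _ _) _; rewrite ler_wpM2l //; exact: hD.
rewrite RintegralZl //; last exact: integrable_norm iw.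
rewrite ler_wpM2l ?mulr_ge0 //.
rewrite /Rintegral.
have h0 : (0 <= \int[mu]_(y in @Omega R) (`|w x y|)%:E)%E.
  by apply: integral_ge0 => y _; rewrite lee_fin.
move: hM h0; case: (\int[mu]_(y in @Omega R) (`|w x y|)%:E)%E => //= r.
exact: mOmega.
Qed.

End W.

Section G.
Context {R : realType}.
Notation I := (`[(-1:R), 1]).

Lemma gron_step (r eps K X Y a p : R) : 0 <= r -> 0 < eps -> 0 <= K -> 1 <= X ->
  0 <= a -> 1 + 2 * K * a <= Y -> p = (r + eps) * (X - 1 / 2) ->
  p + K * (r + p + eps) * a <= (r + eps) * (X * Y - 1 / 2).
Proof.
move=> r0 e0 K0 X1 a0 hY ->.
have c0 : 0 <= r + eps by lra.
have h1 : (r + eps) * X * (2 * K * a) <= (r + eps) * X * (Y - 1).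
  by rewrite ler_wpM2l ?mulr_ge0 //; [lra|lra].
have h2 : 0 <= K * a * (r + eps) * (X - 1 / 2).
  by rewrite !mulr_ge0 //; lra.
have e1 : (r + eps) * (X * Y - 1 / 2) = (r + eps) * (X - 1 / 2) + (r + eps) * X * (Y - 1)
  by field.
have e2 : (r + eps) * (X - 1 / 2) + K * (r + (r + eps) * (X - 1 / 2) + eps) * a
  = (r + eps) * (X - 1 / 2) + (r + eps) * X * (2 * K * a) - K * a * (r + eps) * (X - 1 / 2)
  by field.
rewrite e1 e2; lra.
Qed.

Lemma core (t0 T K r : R) (th th' : R -> R -> R) : 0 < T -> 1 <= K -> 0 <= r ->
  (forall x, x \in I -> th t0 x = 0) ->
  (forall t, t \in `[t0, t0 + T] -> forall e, 0 < e -> exists2 d, 0 < d &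
     forall s, s \in `[t0, t0 + T] -> `|s - t| < d -> forall x, x \in I ->
       `|th s x - th t x| <= e) ->
  (forall t, t \in `[t0, t0 + T] -> forall e, 0 < e -> exists2 d, 0 < d &
     forall s, s \in `[t0, t0 + T] -> 0 < `|s - t| < d -> forall x, x \in I ->
       `|(th s x - th t x) / (s - t) - th' t x| <= e) ->
  (forall t, t \in `[t0, t0 + T] -> forall B, 0 <= B ->
     (forall y, y \in I -> `|th t y| <= B) ->
     forall x, x \in I -> `|th' t x| <= K * (r + B)) ->
  forall t x, t \in `[t0, t0 + T] -> x \in I -> `|th t x| <= r * expR (2 * K * T).
Proof.
move=> T0 K1 r0 hinit hcont hder hbnd t x tJ xI.
set E := expR (2 * K * T).
have E0 : 0 < E by apply: expR_gt0.
have K2 : 0 <= 2 * K by lra.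
apply/ler_addgt0Pr => e e0.
pose eps := e / E.
have eps0 : 0 < eps by rewrite divr_gt0.
have epsE : eps * E = e by rewrite /eps divfK // gt_eqF.
pose psi s := (r + eps) * (expR (2 * K * (s - t0)) - 1 / 2).
have psimono : forall s s', s <= s' -> psi s <= psi s'.
  move=> s s' ss'; rewrite /psi ler_wpM2l ?addr_ge0 ?(ltW eps0) //.
  rewrite lerD2r ler_expR ler_wpM2l //; lra.
have psi0 : forall s, t0 <= s -> 0 <= psi s.
  move=> s ts; rewrite /psi mulr_ge0 //; first lra.
  have := expR_ge1Dx (2 * K * (s - t0)).
  have : 0 <= 2 * K * (s - t0) by rewrite !mulr_ge0 //; lra.
  lra.
suff H : forall s, t0 <= s -> s <= t0 + T -> forall x, x \in I -> `|th s x| <= psi s.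
  move: tJ; rewrite in_itv /= => /andP[t1 t2].
  apply: le_trans (H t t1 t2 x xI) _.
  rewrite -epsE /psi.
  have : expR (2 * K * (t - t0)) <= E.
    by rewrite /E ler_expR ler_wpM2l //; lra.
  move=> hE.
  have : (r + eps) * expR (2 * K * (t - t0)) <= (r + eps) * E.
    by rewrite ler_wpM2l //; lra.
  lra.
have tT : t0 <= t0 + T by lra.
apply: (@real_ind R t0 (t0 + T)) => //.
- move=> y yI; rewrite hinit // normr0; exact: psi0.
- move=> s ts sT IH y yI.
  have sJ : s \in `[t0, t0 + T] by rewrite in_itv /= (ltW ts) sT.
  apply: (@left_close R t0 s (fun z => th z y) psi) => //.
  + move=> e' e'0; have [d d0 Hd] := hcont s sJ e' e'0.
    exists d => // z tz zs sz.
    have zJ : z \in `[t0, t0 + T] by rewrite in_itv /= tz; lra.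
    by rewrite distrC; apply: Hd => //; rewrite ltr0_norm; lra.
  + by move=> z tz zs; apply: IH.
  + by move=> z zs; apply: psimono.
- move=> s ts sT Ps.
  have sJ : s \in `[t0, t0 + T] by rewrite in_itv /= ts (ltW sT).
  have K0 : 0 < K by lra.
  have [d d0 Hd] := hder s sJ (K * eps) (mulr_gt0 K0 eps0).
  exists d => // s' ss' s'd s'T y yI.
  have s'J : s' \in `[t0, t0 + T] by rewrite in_itv /= s'T andbT; lra.
  have hq := Hd s' s'J ltac:(rewrite gtr0_norm; lra) y yI.
  have ne : s != s' by rewrite lt_eqF.
  have hb := quot_bound ne hq.
  rewrite [`|s' - s|]gtr0_norm in hb; last lra.
  have hth' := hbnd s sJ (psi s) (psi0 s ts) Ps y yI.
  have hths := Ps y yI.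
  have h3 : (`|th' s y| + K * eps) * (s' - s) <= K * (r + psi s + eps) * (s' - s).
    by rewrite ler_wpM2r; lra.
  have h4 := ler_normD (th s' y - th s y) (th s y).
  rewrite subrK in h4.
  have h5 : psi s + K * (r + psi s + eps) * (s' - s) <= psi s'.
    rewrite /psi; have -> : 2 * K * (s' - t0) = 2 * K * (s - t0) + 2 * K * (s' - s) by ring.
    rewrite expRD; apply: gron_step => //; try lra.
    - have := expR_ge1Dx (2 * K * (s - t0)).
      have : 0 <= 2 * K * (s - t0) by rewrite !mulr_ge0 //; lra.
      lra.
    - have := expR_ge1Dx (2 * K * (s' - s)); lra.
  lra.
Qed.

End G.

Section F.
Context {R : realType}.
Notation I := (`[(-1:R), 1]).
Notation mu := (@lebesgue_measure R).

Lemma N_lip (w : R -> R -> R) (f : R -> R) (xi : R -> R -> R) (t : R) (v1 v2 : R -> R)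
  (x Mw Lf Mf D : R) :
  measurable_fun (@Omega R) (w x) ->
  (\int[mu]_(y in @Omega R) (`|w x y|)%:E <= Mw%:E)%E ->
  (forall s, `|f s| <= Mf) -> (forall s r, `|f s - f r| <= Lf * `|s - r|) -> 0 <= Lf ->
  inX v1 -> inX v2 -> 0 <= D -> (forall y, y \in I -> `|v1 y - v2 y| <= D) -> x \in I ->
  `|Nop w f xi t v1 x - Nop w f xi t v2 x| <= (1 + Lf * Mw) * D.
Proof.
move=> mw hM hf hL L0 c1 c2 D0 hD xI.
have hW := W_lip w f v1 v2 x Mw Lf Mf D mw hM hf hL L0 c1 c2 D0 hD.
have hx := hD x xI.
rewrite /Nop.
have -> : - v1 x + Wop w (fun y => f (v1 y)) x + xi t x -
   (- v2 x + Wop w (fun y => f (v2 y)) x + xi t x) =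
   - (v1 x - v2 x) + (Wop w (fun y => f (v1 y)) x - Wop w (fun y => f (v2 y)) x) by ring.
apply: le_trans (ler_normD _ _) _; rewrite normrN.
have -> : (1 + Lf * Mw) * D = D + Lf * D * Mw by ring.
lra.
Qed.

Lemma sumB_hat (n : nat) (F G : nat -> R) (x : R) :
  \sum_(j < n.+1) F j * hat n j x - \sum_(j < n.+1) G j * hat n j x =
  \sum_(j < n.+1) (F j - G j) * hat n j x.
Proof. by rewrite -sumrB; apply: eq_bigr => j _; rewrite mulrBl. Qed.

Lemma sum_quot (n : nat) (F G H : nat -> R) (x z : R) :
  (\sum_(j < n.+1) F j * hat n j x - \sum_(j < n.+1) G j * hat n j x) / z
    - \sum_(j < n.+1) H j * hat n j x =
  \sum_(j < n.+1) ((F j - G j) / z - H j) * hat n j x.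
Proof.
rewrite sumB_hat mulr_suml -sumrB; apply: eq_bigr => j _.
by rewrite [in RHS]mulrBl [in RHS]mulrAC.
Qed.


Lemma fixed_n (t0 T : R) (w : R -> R -> R) (f : R -> R) (xi : R -> R -> R)
  (u0 : R -> R) (u un : R -> R -> R) (n : nat) (Mw Lf Mf r : R) :
  0 < T -> (0 < n)%N ->
  (forall x, x \in I -> measurable_fun (@Omega R) (w x)) ->
  (forall x, x \in I -> (\int[mu]_(y in @Omega R) (`|w x y|)%:E <= Mw%:E)%E) ->
  (forall s, `|f s| <= Mf) -> (forall s r, `|f s - f r| <= Lf * `|s - r|) ->
  0 <= Lf -> 0 <= Mw ->
  isSolution t0 T (Nop w f xi) u0 u ->
  isSolution t0 T (fun t v => Pn n (Nop w f xi t v)) (Pn n u0) un ->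
  0 <= r -> (forall t x, t \in `[t0, t0 + T] -> x \in I -> `|u t x - Pn n (u t) x| <= r) ->
  forall t x, t \in `[t0, t0 + T] -> x \in I ->
    `|u t x - un t x| <= r * (1 + expR (2 * (1 + Lf * Mw) * T)).
Proof.
move=> T0 n0 mw hw hf hL L0 M0 [U' [cu cu' du eqU iu]] [V' [cv cv' dv eqV iv]] r0 hr.
pose K := 1 + Lf * Mw.
have K1 : 1 <= K by rewrite /K; have := mulr_ge0 L0 M0; lra.
pose th t x := Pn n (u t) x - un t x.
pose th' t x := \sum_(j < n.+1) U' t (node R n j) * hat n j x - V' t x.
have nI : forall j : 'I_n.+1, node R n j \in I.
  by move=> j; apply: (node_I n n0); rewrite -ltnS.
have hc : forall t x, t \in `[t0, t0 + T] -> x \in I -> `|th t x| <= r * expR (2 * K * T).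
  apply: (@core R t0 T K r th th' T0 K1 r0).
  - move=> x xI; rewrite /th iv // /Pn; apply/eqP; rewrite subr_eq0; apply/eqP.
    by apply: eq_bigr => j _; rewrite iu.
  - move=> t tJ e e0.
    have [d1 d10 H1] := cu.2 t tJ (e / 2) ltac:(lra).
    have [d2 d20 H2] := cv.2 t tJ (e / 2) ltac:(lra).
    exists (Num.min d1 d2); first by rewrite lt_min d10 d20.
    move=> s sJ; rewrite lt_min => /andP[sd1 sd2] x xI.
    have -> : th s x - th t x = \sum_(j < n.+1) (u s (node R n j) - u t (node R n j)) * hat n j x
       - (un s x - un t x).
      by rewrite /th /Pn -(sumB_hat n (fun j => u s (node R n j)) (fun j => u t (node R n j))); ring.
    apply: le_trans (ler_normB _ _) _.
    have h1 : `|\sum_(j < n.+1) (u s (node R n j) - u t (node R n j)) * hat n j x| <= e / 2.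
      apply: (Pn_bound n n0 x (fun j => u s (node R n j) - u t (node R n j)) (e / 2) xI) => j jn _.
      by apply: H1 => //; apply: (node_I n n0).
    have := H2 s sJ sd2 x xI; lra.
  - move=> t tJ e e0.
    have [d1 d10 H1] := du t tJ (e / 2) ltac:(lra).
    have [d2 d20 H2] := dv t tJ (e / 2) ltac:(lra).
    exists (Num.min d1 d2); first by rewrite lt_min d10 d20.
    move=> s sJ /andP[st0]; rewrite lt_min => /andP[sd1 sd2] x xI.
    have st : s - t != 0 by rewrite -normr_gt0.
    have -> : (th s x - th t x) / (s - t) - th' t x =
      ((Pn n (u s) x - Pn n (u t) x) / (s - t)
          - \sum_(j < n.+1) U' t (node R n j) * hat n j x)
      - ((un s x - un t x) / (s - t) - V' t x).
      by rewrite /th /th'; field.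
    rewrite /Pn (sum_quot n (fun j => u s (node R n j)) (fun j => u t (node R n j)) (fun j => U' t (node R n j))).
    apply: le_trans (ler_normB _ _) _.
    have h1 : `|\sum_(j < n.+1) ((u s (node R n j) - u t (node R n j)) / (s - t)
                  - U' t (node R n j)) * hat n j x| <= e / 2.
      apply: (Pn_bound n n0 x (fun j => (u s (node R n j) - u t (node R n j)) / (s - t)
                  - U' t (node R n j)) (e / 2) xI) => j jn _.
      by apply: H1 => //; [rewrite st0 | apply: (node_I n n0)].
    have := H2 s sJ ltac:(by rewrite st0 sd2) x xI; lra.
  - move=> t tJ B B0 hB x xI.
    rewrite /th' eqV // /Pn (sumB_hat n (fun j => U' t (node R n j))
       (fun j => Nop w f xi t (un t) (node R n j))).
    apply: (Pn_bound n n0 x (fun j => U' t (node R n j) - Nop w f xi t (un t) (node R n j))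
       (K * (r + B)) xI) => j jn _.
    have jI : node R n j \in I := node_I n n0 _ jn.
    rewrite eqU //.
    have D0 : 0 <= r + B by lra.
    have hD : forall y, y \in I -> `|u t y - un t y| <= r + B.
      move=> y yI.
      have -> : u t y - un t y = (u t y - Pn n (u t) y) + th t y by rewrite /th; ring.
      apply: le_trans (ler_normD _ _) _.
      have := hr t y tJ yI; have := hB y yI; lra.
    exact: (N_lip w f xi t (u t) (un t) (node R n j) Mw Lf Mf (r + B)
              (mw _ jI) (hw _ jI) hf hL L0 (cu.1 t tJ) (cv.1 t tJ) D0 hD jI).
move=> t x tJ xI.
have -> : u t x - un t x = (u t x - Pn n (u t) x) + th t x by rewrite /th; ring.
apply: le_trans (ler_normD _ _) _.
have := hr t x tJ xI; have := hc t x tJ xI; rewrite /K; lra.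
Qed.

End F.

Section Rho.
Context {R : realType}.
Notation I := (`[(-1:R), 1]).

Lemma rho_eq (n : nat) (n0 : (0 < n)%N) (g : R -> R) (x : R) : x \in I ->
  g x - Pn n g x = \sum_(j < n.+1) (g x - g (node R n j)) * hat n j x.
Proof.
move=> xI; have [h1 _] := hat_sums n n0 x xI.
rewrite /Pn -{1}(mulr1 (g x)) -h1 mulr_sumr -sumrB; apply: eq_bigr => j _; ring.
Qed.

Lemma rho_eq2 (n : nat) (n0 : (0 < n)%N) (g : R -> R) (c x : R) : x \in I ->
  g x - Pn n g x =
  \sum_(j < n.+1) (- (g (node R n j) - g x - c * (node R n j - x))) * hat n j x.
Proof.
move=> xI; have [h1 h2] := hat_sums n n0 x xI.
rewrite rho_eq //.
have e : \sum_(j < n.+1) (- (g (node R n j) - g x - c * (node R n j - x))) * hat n j x =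
   \sum_(j < n.+1) (g x - g (node R n j)) * hat n j x
   + c * \sum_(j < n.+1) (node R n j - x) * hat n j x.
  by rewrite mulr_sumr -big_split /=; apply: eq_bigr => j _; ring.
have z : \sum_(j < n.+1) (node R n j - x) * hat n j x = 0.
  rewrite (eq_bigr (fun j : 'I_n.+1 => node R n j * hat n j x - x * hat n j x)); last first.
    by move=> j _; ring.
  by rewrite sumrB -mulr_sumr h1 h2 mulr1 subrr.
by rewrite e z mulr0 addr0.
Qed.

End Rho.

Theorem corollary5p1 (R : realType) (t0 T : R) (w : R -> R -> R)
  (f : R -> R) (xi : R -> R -> R) (u0 : R -> R)
  (u : R -> R -> R) (un : nat -> R -> R -> R) :
  0 < T ->
  (* kernel w on [-1,1]^2 *)
  (forall x : R, x \in `[(-1)%R, 1%R] -> measurable_fun (@Omega R) (w x)) ->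
  (forall eps : R, 0 < eps -> exists2 h : R, 0 < h &
     forall x z : R, x \in `[(-1)%R, 1%R] -> z \in `[(-1)%R, 1%R] -> `|x - z| <= h ->
       (\int[lebesgue_measure]_(y in @Omega R) (`|w x y - w z y|)%:E <= eps%:E)%E) ->
  (exists M : R, forall x : R, x \in `[(-1)%R, 1%R] ->
       (\int[lebesgue_measure]_(y in @Omega R) (`|w x y|)%:E <= M%:E)%E) ->
  (* f bounded, differentiable, Lipschitz, f' bounded *)
  (exists M : R, forall s : R, `|f s| <= M) ->
  (forall s : R, derivable f s 1) ->
  (exists L : R, forall s r : R, `|f s - f r| <= L * `|s - r|) ->
  (exists M : R, forall s : R, `|derive1 f s| <= M) ->
  (* xi in C(J, X), u0 in X *)
  inCJX t0 T xi ->
  inX u0 ->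
  (* u solves u' = N(t,u), u(t0) = u0 *)
  isSolution t0 T (Nop w f xi) u0 u ->
  (* u_n solves u_n' = P_n N(t,u_n), u_n(t0) = P_n u0 *)
  (forall n : nat, (0 < n)%N ->
     isSolution t0 T (fun t v => Pn n (Nop w f xi t v)) (Pn n u0) (un n)) ->
  (forall eps : R, 0 < eps -> exists N : nat, forall n : nat, (0 < n)%N -> (N <= n)%N ->
     forall t : R, t \in `[t0, t0 + T] -> forall x : R, x \in `[(-1)%R, 1%R] ->
       `|u t x - un n t x| <= eps)
  /\
  (inCJC2 t0 T u ->
   exists2 kappa : R, 0 < kappa &
     forall n : nat, (0 < n)%N ->
       forall t : R, t \in `[t0, t0 + T] -> forall x : R, x \in `[(-1)%R, 1%R] ->
         `|u t x - un n t x| <= kappa * @hx R n ^+ 2).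
Proof.
move=> T0 mw _ [M hM] [Mf hf] _ [L hL] _ _ _ Hu Hun.
pose Lp := Num.max L 0; pose Mp := Num.max M 0.
have Lp0 : 0 <= Lp by rewrite /Lp le_max lexx orbT.
have Mp0 : 0 <= Mp by rewrite /Mp le_max lexx orbT.
have hL' : forall s r, `|f s - f r| <= Lp * `|s - r|.
  move=> s r; apply: le_trans (hL s r) _; rewrite ler_wpM2r //.
  by rewrite /Lp le_max lexx.
have hM' : forall x, x \in `[(-1)%R, 1%R] ->
    (\int[lebesgue_measure]_(y in @Omega R) (`|w x y|)%:E <= Mp%:E)%E.
  move=> x xI; apply: le_trans (hM x xI) _.
  by rewrite lee_fin /Mp le_max lexx.
set C := 1 + expR (2 * (1 + Lp * Mp) * T).
have C0 : 0 < C by rewrite /C; have := expR_gt0 (2 * (1 + Lp * Mp) * T); lra.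
have Hfix := fun n n0 r r0 hr =>
  @fixed_n R t0 T w f xi u0 u (un n) n Mp Lp Mf r T0 n0 mw hM' hf hL' Lp0 Mp0 Hu
    (Hun n n0) r0 hr.
have [U' [cu _ _ _ _]] := Hu.
split.
- move=> e e0.
  pose eta := e / C.
  have eta0 : 0 < eta by rewrite divr_gt0.
  have [d d0 Hd] := unifcont_JI t0 T T0 u cu eta eta0.
  exists (Num.Def.archi_bound (2 / d)) => n n0 Nn t tJ x xI.
  have hn : hx R n < d.
    have h2d : 0 <= 2 / d by rewrite divr_ge0 // ltW.
    have := archi_boundP h2d.
    have : (Num.Def.archi_bound (2 / d))%:R <= n%:R :> R by rewrite ler_nat.
    move=> h1 h2.
    have : 2 / d < n%:R by lra.
    rewrite ltr_pdivrMr // /hx ltr_pdivrMr ?ltr0n // => h3.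
    by rewrite mulrC.
  have hr : forall t x, t \in `[t0, t0 + T] -> x \in `[(-1)%R, 1%R] ->
      `|u t x - Pn n (u t) x| <= eta.
    move=> t' x' tJ' xI'.
    rewrite rho_eq //.
    apply: (Pn_bound n n0 x' (fun j => u t' x' - u t' (node R n j)) eta xI') => j jn hj.
    apply: Hd => //; first exact: node_I.
    exact: lt_trans hj hn.
  have := Hfix n n0 eta (ltW eta0) hr t x tJ xI.
  by rewrite -/C /eta divfK // gt_eqF.
- move=> [v1 [v2 [cu0 cv1 cv2 hd1 hd2]]].
  have [B HB] := bound_JI t0 T T0 v2 cv2.
  pose Bp := Num.max B 0.
  have Bp0 : 0 <= Bp by rewrite /Bp le_max lexx orbT.
  have HB' : forall t x, t \in `[t0, t0 + T] -> x \in `[(-1)%R, 1%R] -> `|v2 t x| <= Bp.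
    by move=> t x tJ xI; apply: le_trans (HB t x tJ xI) _; rewrite /Bp le_max lexx.
  exists ((Bp + 1) * C); first by rewrite mulr_gt0 //; lra.
  move=> n n0 t tJ x xI.
  have hp := hx_gt0 n n0 (R := R).
  have hr : forall t x, t \in `[t0, t0 + T] -> x \in `[(-1)%R, 1%R] ->
      `|u t x - Pn n (u t) x| <= Bp * hx R n ^+ 2.
    move=> t' x' tJ' xI'.
    rewrite (rho_eq2 n n0 (u t') (v1 t' x')) //.
    apply: (Pn_bound n n0 x' (fun j => - (u t' (node R n j) - u t' x'
               - v1 t' x' * (node R n j - x'))) _ xI') => j jn hj.
    rewrite normrN.
    have ht := taylor (u t') (v1 t') (v2 t') Bp (hd1 t' tJ') (hd2 t' tJ') (fun z zI => HB' t' z tJ' zI) x' (node R n j) xI' (node_I n n0 _ jn).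
    apply: le_trans ht _.
    rewrite ler_wpM2l // -[(node R n j - x') ^+ 2](real_normK (num_real _)) distrC.
    rewrite !expr2; apply: ler_pM => //; exact: ltW.
  have := Hfix n n0 (Bp * hx R n ^+ 2) (mulr_ge0 Bp0 (exprn_ge0 2 (ltW hp))) hr t x tJ xI.
  rewrite -/C => h; apply: le_trans h _.
  have h2 : 0 <= hx R n ^+ 2 by apply: exprn_ge0; exact: ltW.
  rewrite mulrC mulrA ler_wpM2r //.
  by rewrite mulrC ler_wpM2r //; [exact: ltW | lra].
Qed.
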